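(* Let $\gamma_a,\gamma_s>0$, $\lambda\ge0$, $q>0$, $\sigma_B>0$, $\varepsilon_a\in(0,2)$, and let $\beta_a,\beta_s:\mathbb R\to\mathbb R$ be globally Lipschitz continuous with $\beta_a\ge0$, $\beta_s>0$. If $T_a^{(0)}\ge0$ and $T_s^{(0)}\ge0$, then the maximal solution of \[ \begin{cases} \gamma_a T_a'=-\lambda(T_a-T_s)+\varepsilon_a\sigma_B|T_s|^3T_s-2\varepsilon_a\sigma_B|T_a|^3T_a+q\beta_a(T_a),\\ \gamma_s T_s'=-\lambda(T_s-T_a)-\sigma_B|T_s|^3T_s+\varepsilon_a\sigma_B|T_a|^3T_a+q\beta_s(T_s),\\ T_a(0)=T_a^{(0)},\quad T_s(0)=T_s^{(0)} \end{cases} \] exists on $[0,+\infty)$. *)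

(* Defs.v *)
From Stdlib Require Export Reals.
From Coquelicot Require Export Coquelicot.
Open Scope R_scope.

Definition globally_lipschitz (f : R -> R) : Prop :=
  exists L : R, 0 <= L /\ forall x y : R, Rabs (f x - f y) <= L * Rabs (x - y).

(* Main.v *)
Require Import Defs.
From Stdlib Require Import Reals.
From Coquelicot Require Import Coquelicot.
From Stdlib Require Import Lra Psatz Lia.
Open Scope R_scope.


Definition lipc (G : R -> R -> R) (L : R) : Prop :=
  forall x y x' y', Rabs (G x y - G x' y') <= L * (Rabs (x - x') + Rabs (y - y')).

Lemma lip_cont (f : R -> R) (K t : R) : 0 <= K ->
  (forall s, Rabs (f s - f t) <= K * Rabs (s - t)) -> continuous f t.
Proof.
  intros HK H. apply continuity_pt_filterlim.
  unfold continuity_pt, continue_in, limit1_in, limit_in.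
  intros eps Heps. exists (eps / (K + 1)). split.
  { apply Rdiv_lt_0_compat; lra. }
  intros x [_ Hx]. simpl in *. unfold R_dist in *.
  eapply Rle_lt_trans. apply H.
  assert (Hk : K * Rabs (x - t) <= K * (eps / (K+1))).
  { apply Rmult_le_compat_l; lra. }
  eapply Rle_lt_trans. apply Hk.
  assert (eps / (K+1) * (K+1) = eps) by (field; lra).
  nra.
Qed.

Lemma RInt_minus_R (f g : R -> R) a b : ex_RInt f a b -> ex_RInt g a b ->
  RInt (fun x => f x - g x) a b = RInt f a b - RInt g a b.
Proof. intros Hf Hg. apply (RInt_minus f g a b Hf Hg). Qed.

Lemma cont_ex_RInt (g : R -> R) a b : (forall s, continuous g s) -> ex_RInt g a b.
Proof. intros H. apply (@ex_RInt_continuous R_CompleteNormedModule). intros; apply H. Qed.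

Lemma cont_of_derive (f : R -> R) x : ex_derive f x -> continuous f x.
Proof. intros H. exact (ex_derive_continuous f x H). Qed.

Lemma int_exp_bound (g : R -> R) (K a t : R) : 0 < a ->
  (forall s, continuous g s) ->
  (forall s, Rabs (g s) <= K * exp (a * Rabs s)) ->
  Rabs (RInt g 0 t) <= K * (exp (a * Rabs t) - 1) / a.
Proof.
  intros Ha Hc Hb.
  assert (Hca : forall s, continuous (fun x => Rabs (g x)) s).
  { intros s. apply continuous_comp with (g := Rabs). apply Hc.
    apply continuous_Rabs. }
  destruct (Rle_or_lt 0 t) as [Ht|Ht].
  - eapply Rle_trans. apply abs_RInt_le. lra. now apply cont_ex_RInt.
    assert (HI : is_RInt (fun s => K * exp (a * s)) 0 t
        (minus (K * exp (a * t) / a) (K * exp (a * 0) / a))).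
    { apply (is_RInt_derive (fun s => K * exp (a * s) / a)).
      - intros x _. auto_derive. auto. field. lra.
      - intros x _.
        apply cont_of_derive. auto_derive. auto. }
    eapply Rle_trans. apply RInt_le with (g := fun s => K * exp (a * s)).
    lra. now apply cont_ex_RInt. eexists; apply HI.
    intros x Hx. rewrite <- (Rabs_pos_eq x) at 2 by lra. apply Hb.
    rewrite (is_RInt_unique _ _ _ _ HI). rewrite Rabs_pos_eq by lra.
    unfold minus, plus, opp; simpl. rewrite Rmult_0_r, exp_0.
    right; field; lra.
  - rewrite <- Rabs_Ropp.
    assert (He : - RInt g 0 t = RInt g t 0).
    { apply (opp_RInt_swap g 0 t). now apply cont_ex_RInt. }
    rewrite He.
    eapply Rle_trans. apply abs_RInt_le. lra. now apply cont_ex_RInt.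
    assert (HI : is_RInt (fun s => K * exp (- a * s)) t 0
        (minus (- K * exp (- a * 0) / a) (- K * exp (- a * t) / a))).
    { apply (is_RInt_derive (fun s => - K * exp (- a * s) / a)).
      - intros x _. auto_derive. auto. field. lra.
      - intros x _.
        apply cont_of_derive. auto_derive. auto. }
    eapply Rle_trans. apply RInt_le with (g := fun s => K * exp (- a * s)).
    lra. now apply cont_ex_RInt. eexists; apply HI.
    intros x Hx. replace (- a * x) with (a * Rabs x). apply Hb.
    rewrite Rabs_left by lra. ring.
    rewrite (is_RInt_unique _ _ _ _ HI). rewrite Rabs_left by lra.
    unfold minus, plus, opp; simpl. rewrite Rmult_0_r, exp_0.
    replace (a * - t) with (- a * t) by ring.
    right; field; lra.
Qed.


Fixpoint pic (G1 G2 : R -> R -> R) (x0 y0 : R) (n : nat) : (R -> R) * (R -> R) :=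
  match n with
  | O => (fun _ => x0, fun _ => y0)
  | S m => let p := pic G1 G2 x0 y0 m in
     (fun t => x0 + RInt (fun s => G1 (fst p s) (snd p s)) 0 t,
      fun t => y0 + RInt (fun s => G2 (fst p s) (snd p s)) 0 t)
  end.

Definition PH (G1 G2 : R -> R -> R) (L B : R) : Prop :=
  0 < L /\ lipc G1 L /\ lipc G2 L /\ (forall x y, Rabs (G1 x y) <= B)
  /\ (forall x y, Rabs (G2 x y) <= B).

Lemma PH_B G1 G2 L B : PH G1 G2 L B -> 0 <= B.
Proof. intros (_&_&_&H&_). eapply Rle_trans. apply Rabs_pos. apply (H 0 0). Qed.

Lemma comp_cont G L B (u v : R -> R) t : 0 < L -> 0 <= B -> lipc G L ->
  (forall s, Rabs (u s - u t) <= B * Rabs (s - t)) ->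
  (forall s, Rabs (v s - v t) <= B * Rabs (s - t)) ->
  continuous (fun s => G (u s) (v s)) t.
Proof.
  intros HL HB HG Hu Hv. apply lip_cont with (K := L * (2 * B)). nra.
  intros s. eapply Rle_trans. apply HG.
  specialize (Hu s); specialize (Hv s).
  assert (0 <= Rabs (s - t)) by apply Rabs_pos. nra.
Qed.

Lemma pic_S G1 G2 x0 y0 n t :
  fst (pic G1 G2 x0 y0 (S n)) t = x0 + RInt (fun s => G1 (fst (pic G1 G2 x0 y0 n) s) (snd (pic G1 G2 x0 y0 n) s)) 0 t
  /\ snd (pic G1 G2 x0 y0 (S n)) t = y0 + RInt (fun s => G2 (fst (pic G1 G2 x0 y0 n) s) (snd (pic G1 G2 x0 y0 n) s)) 0 t.
Proof. split; reflexivity. Qed.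

Lemma int_lip (g : R -> R) B s t : (forall s, continuous g s) -> (forall x, Rabs (g x) <= B) ->
  Rabs (RInt g 0 s - RInt g 0 t) <= B * Rabs (s - t).
Proof.
  intros Hc Hb.
  assert (E : RInt g 0 s - RInt g 0 t = RInt g t s).
  { rewrite <- (RInt_Chasles g 0 t s). unfold plus; simpl; ring.
    now apply cont_ex_RInt. now apply cont_ex_RInt. }
  rewrite E. rewrite Rmult_comm.
  apply (norm_RInt_le_const_abs g t s (RInt g t s) B).
  intros; apply Hb. exact (RInt_correct g t s (cont_ex_RInt g t s Hc)).
Qed.

Lemma pic_lip G1 G2 x0 y0 L B (H : PH G1 G2 L B) n s t :
  Rabs (fst (pic G1 G2 x0 y0 n) s - fst (pic G1 G2 x0 y0 n) t) <= B * Rabs (s - t) /\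
  Rabs (snd (pic G1 G2 x0 y0 n) s - snd (pic G1 G2 x0 y0 n) t) <= B * Rabs (s - t).
Proof.
  pose proof (PH_B _ _ _ _ H) as HB0.
  destruct H as (HL & H1 & H2 & HB1 & HB2).
  revert s t. induction n as [|n IH]; intros s t.
  - simpl. unfold Rminus. rewrite !Rplus_opp_r, Rabs_R0.
    split; apply Rmult_le_pos; auto; apply Rabs_pos.
  - destruct (pic_S G1 G2 x0 y0 n s) as [E1 E2].
    destruct (pic_S G1 G2 x0 y0 n t) as [E3 E4].
    rewrite E1, E2, E3, E4.
    set (u := fst (pic G1 G2 x0 y0 n)). set (v := snd (pic G1 G2 x0 y0 n)).
    assert (Hc1 : forall r, continuous (fun s => G1 (u s) (v s)) r).
    { intros r. apply comp_cont with L B; auto; intros; apply IH. }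
    assert (Hc2 : forall r, continuous (fun s => G2 (u s) (v s)) r).
    { intros r. apply comp_cont with L B; auto; intros; apply IH. }
    split.
    + replace (x0 + RInt (fun s0 => G1 (u s0) (v s0)) 0 s - (x0 + RInt (fun s0 => G1 (u s0) (v s0)) 0 t))
        with (RInt (fun s0 => G1 (u s0) (v s0)) 0 s - RInt (fun s0 => G1 (u s0) (v s0)) 0 t) by ring.
      apply int_lip; auto.
    + replace (y0 + RInt (fun s0 => G2 (u s0) (v s0)) 0 s - (y0 + RInt (fun s0 => G2 (u s0) (v s0)) 0 t))
        with (RInt (fun s0 => G2 (u s0) (v s0)) 0 s - RInt (fun s0 => G2 (u s0) (v s0)) 0 t) by ring.
      apply int_lip; auto.
Qed.


Lemma exp_ge1 a s : 0 <= a -> 1 <= exp (a * Rabs s).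
Proof. intros Ha. pose proof (exp_ineq1_le (a * Rabs s)). pose proof (Rabs_pos s). nra. Qed.

Lemma plus_minus_l (x i : R) : x + i - x = i.
Proof. ring. Qed.
Lemma plus_minus_2 (x i j : R) : x + i - (x + j) = i - j.
Proof. ring. Qed.

Lemma step_bound G L (u v u' v' : R -> R) K a t : 0 < a -> 0 <= L -> lipc G L ->
  (forall s, continuous (fun r => G (u r) (v r)) s) ->
  (forall s, continuous (fun r => G (u' r) (v' r)) s) ->
  (forall s, Rabs (u s - u' s) + Rabs (v s - v' s) <= K * exp (a * Rabs s)) ->
  Rabs (RInt (fun r => G (u r) (v r)) 0 t - RInt (fun r => G (u' r) (v' r)) 0 t)
   <= L * K * (exp (a * Rabs t) - 1) / a.
Proof.
  intros Ha HL HG C1 C2 Hb.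
  rewrite <- RInt_minus_R by (apply cont_ex_RInt; auto).
  apply int_exp_bound; auto.
  - intros s. exact (continuous_minus _ _ s (C1 s) (C2 s)).
  - intros s. eapply Rle_trans. apply HG. rewrite Rmult_assoc.
    apply Rmult_le_compat_l; auto.
Qed.

Lemma pic_D G1 G2 x0 y0 L B (H : PH G1 G2 L B) n t :
  Rabs (fst (pic G1 G2 x0 y0 (S n)) t - fst (pic G1 G2 x0 y0 n) t)
  + Rabs (snd (pic G1 G2 x0 y0 (S n)) t - snd (pic G1 G2 x0 y0 n) t)
  <= (2 * B / (4 * L)) * (1/2)^n * exp ((4 * L) * Rabs t).
Proof.
  pose proof (PH_B _ _ _ _ H) as HB0.
  pose proof (pic_lip _ _ x0 y0 _ _ H) as HLip.
  destruct H as (HL & H1 & H2 & HB1 & HB2).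
  assert (Hc1 : forall m r, continuous (fun s => G1 (fst (pic G1 G2 x0 y0 m) s) (snd (pic G1 G2 x0 y0 m) s)) r).
  { intros m r. apply comp_cont with L B; auto; intros; apply HLip. }
  assert (Hc2 : forall m r, continuous (fun s => G2 (fst (pic G1 G2 x0 y0 m) s) (snd (pic G1 G2 x0 y0 m) s)) r).
  { intros m r. apply comp_cont with L B; auto; intros; apply HLip. }
  pose proof (exp_ge1 (4 * L) t) as He.
  revert t He. induction n as [|n IH]; intros t He.
  - destruct (pic_S G1 G2 x0 y0 0 t) as [E1 E2]. rewrite E1, E2.
    replace (x0 + _ - fst (pic G1 G2 x0 y0 0) t) with
      (RInt (fun s => G1 (fst (pic G1 G2 x0 y0 0) s) (snd (pic G1 G2 x0 y0 0) s)) 0 t) by (simpl; symmetry; apply plus_minus_l).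
    replace (y0 + _ - snd (pic G1 G2 x0 y0 0) t) with
      (RInt (fun s => G2 (fst (pic G1 G2 x0 y0 0) s) (snd (pic G1 G2 x0 y0 0) s)) 0 t) by (simpl; symmetry; apply plus_minus_l).
    assert (Hx : forall G, (forall r, continuous (fun s => G (fst (pic G1 G2 x0 y0 0) s) (snd (pic G1 G2 x0 y0 0) s)) r) ->
      (forall x y, Rabs (G x y) <= B) ->
      Rabs (RInt (fun s => G (fst (pic G1 G2 x0 y0 0) s) (snd (pic G1 G2 x0 y0 0) s)) 0 t)
      <= B * (exp (4 * L * Rabs t) - 1) / (4 * L)).
    { intros G HcG HBG. apply int_exp_bound. lra. auto.
      intros s. eapply Rle_trans. apply HBG. pose proof (exp_ge1 (4*L) s). nra. }
    pose proof (Hx G1 (Hc1 0%nat) HB1). pose proof (Hx G2 (Hc2 0%nat) HB2).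
    simpl pow.
    assert (B * (exp (4 * L * Rabs t) - 1) / (4 * L) <= B * exp (4 * L * Rabs t) / (4 * L)).
    { unfold Rdiv. apply Rmult_le_compat_r. left; apply Rinv_0_lt_compat; lra. nra. }
    replace (2 * B / (4 * L) * 1 * exp (4 * L * Rabs t)) with (2 * (B * exp (4 * L * Rabs t) / (4 * L))) by (field; lra).
    lra.
  - destruct (pic_S G1 G2 x0 y0 (S n) t) as [E1 E2]. rewrite E1, E2.
    destruct (pic_S G1 G2 x0 y0 n t) as [E3 E4]. rewrite E3, E4.
    set (K := 2 * B / (4 * L) * (1 / 2) ^ n).
    assert (HK : forall s, Rabs (fst (pic G1 G2 x0 y0 (S n)) s - fst (pic G1 G2 x0 y0 n) s) +
      Rabs (snd (pic G1 G2 x0 y0 (S n)) s - snd (pic G1 G2 x0 y0 n) s) <= K * exp (4 * L * Rabs s)).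
    { intros s. apply IH. apply exp_ge1; lra. }
    pose proof (step_bound G1 L _ _ _ _ K (4*L) t ltac:(lra) ltac:(lra) H1 (Hc1 (S n)) (Hc1 n) HK) as S1.
    pose proof (step_bound G2 L _ _ _ _ K (4*L) t ltac:(lra) ltac:(lra) H2 (Hc2 (S n)) (Hc2 n) HK) as S2.
    match goal with |- Rabs ?A + Rabs ?B' <= _ =>
      match type of S1 with Rabs ?A1 <= _ => replace A with A1 by (symmetry; apply plus_minus_2) end;
      match type of S2 with Rabs ?B1 <= _ => replace B' with B1 by (symmetry; apply plus_minus_2) end end.
    assert (HK0 : 0 <= K). { unfold K. apply Rmult_le_pos. apply Rdiv_le_0_compat; lra. apply pow_le; lra. }
    replace (2 * B / (4 * L) * (1 / 2) ^ S n * exp (4 * L * Rabs t)) with (K * exp (4 * L * Rabs t) / 2) by (unfold K; simpl; field; lra).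
    replace (L * K * (exp (4 * L * Rabs t) - 1) / (4 * L)) with (K * (exp (4 * L * Rabs t) - 1) / 4) in S1, S2 by (field; lra).
    nra.
Qed.


Lemma pic_cauchy G1 G2 x0 y0 L B (H : PH G1 G2 L B) n k t :
  Rabs (fst (pic G1 G2 x0 y0 (n + k)) t - fst (pic G1 G2 x0 y0 n) t)
  + Rabs (snd (pic G1 G2 x0 y0 (n + k)) t - snd (pic G1 G2 x0 y0 n) t)
  <= 2 * (2 * B / (4 * L)) * exp ((4 * L) * Rabs t) * ((1/2)^n - (1/2)^(n+k)).
Proof.
  induction k as [|k IH].
  - rewrite Nat.add_0_r. unfold Rminus. rewrite !Rplus_opp_r, Rabs_R0. lra.
  - rewrite Nat.add_succ_r.
    pose proof (pic_D _ _ x0 y0 _ _ H (n + k) t) as D.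
    set (C := 2 * B / (4 * L)) in *.
    set (e := exp (4 * L * Rabs t)) in *.
    set (a1 := fst (pic G1 G2 x0 y0 (S (n + k))) t) in *.
    set (a2 := fst (pic G1 G2 x0 y0 (n + k)) t) in *.
    set (a3 := fst (pic G1 G2 x0 y0 n) t) in *.
    set (b1 := snd (pic G1 G2 x0 y0 (S (n + k))) t) in *.
    set (b2 := snd (pic G1 G2 x0 y0 (n + k)) t) in *.
    set (b3 := snd (pic G1 G2 x0 y0 n) t) in *.
    assert (T1 : Rabs (a1 - a3) <= Rabs (a1 - a2) + Rabs (a2 - a3)).
    { replace (a1 - a3) with ((a1 - a2) + (a2 - a3)) by ring. apply Rabs_triang. }
    assert (T2 : Rabs (b1 - b3) <= Rabs (b1 - b2) + Rabs (b2 - b3)).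
    { replace (b1 - b3) with ((b1 - b2) + (b2 - b3)) by ring. apply Rabs_triang. }
    replace ((1/2) ^ S (n + k)) with ((1/2) * (1/2)^(n+k)) by (simpl; ring).
    lra.
Qed.

Lemma pic_cauchy' G1 G2 x0 y0 L B (H : PH G1 G2 L B) n m t : (n <= m)%nat ->
  Rabs (fst (pic G1 G2 x0 y0 m) t - fst (pic G1 G2 x0 y0 n) t)
  + Rabs (snd (pic G1 G2 x0 y0 m) t - snd (pic G1 G2 x0 y0 n) t)
  <= 2 * (2 * B / (4 * L)) * exp ((4 * L) * Rabs t) * (1/2)^n.
Proof.
  intros Hnm. replace m with (n + (m - n))%nat by lia.
  eapply Rle_trans. apply (pic_cauchy _ _ _ _ _ _ H).
  pose proof (PH_B _ _ _ _ H). destruct H as [HL _].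
  assert (0 <= 2 * (2 * B / (4 * L)) * exp ((4 * L) * Rabs t)).
  { apply Rmult_le_pos. apply Rmult_le_pos. lra. apply Rdiv_le_0_compat; lra. left; apply exp_pos. }
  assert (0 <= (1/2)^(n + (m-n))) by (apply pow_le; lra).
  nra.
Qed.

Definition lu G1 G2 x0 y0 t := real (Lim_seq (fun n => fst (pic G1 G2 x0 y0 n) t)).
Definition lv G1 G2 x0 y0 t := real (Lim_seq (fun n => snd (pic G1 G2 x0 y0 n) t)).

Lemma small_pow (c eps : R) : 0 <= c -> 0 < eps -> exists N : nat, c * (1/2)^N < eps.
Proof.
  intros Hc He.
  destruct (pow_lt_1_zero (1/2) ltac:(rewrite Rabs_pos_eq; lra) (eps / (c + 1)) ltac:(apply Rdiv_lt_0_compat; lra)) as [N HN].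
  exists N. specialize (HN N (le_n N)). rewrite Rabs_pos_eq in HN by (apply pow_le; lra).
  assert (0 <= (1/2)^N) by (apply pow_le; lra).
  assert (eps / (c+1) * (c+1) = eps) by (field; lra).
  nra.
Qed.

Lemma lim_both G1 G2 x0 y0 L B (H : PH G1 G2 L B) t :
  is_lim_seq (fun n => fst (pic G1 G2 x0 y0 n) t) (lu G1 G2 x0 y0 t) /\
  is_lim_seq (fun n => snd (pic G1 G2 x0 y0 n) t) (lv G1 G2 x0 y0 t).
Proof.
  set (c := 2 * (2 * B / (4 * L)) * exp ((4 * L) * Rabs t)).
  assert (Hc : 0 <= c).
  { pose proof (PH_B _ _ _ _ H). destruct H as [HL _]. unfold c.
    apply Rmult_le_pos. apply Rmult_le_pos. lra. apply Rdiv_le_0_compat; lra. left; apply exp_pos. }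
  assert (HC : forall n m, (n <= m)%nat ->
     Rabs (fst (pic G1 G2 x0 y0 m) t - fst (pic G1 G2 x0 y0 n) t) <= c * (1/2)^n /\
     Rabs (snd (pic G1 G2 x0 y0 m) t - snd (pic G1 G2 x0 y0 n) t) <= c * (1/2)^n).
  { intros n m Hnm. pose proof (pic_cauchy' _ _ x0 y0 _ _ H n m t Hnm).
    pose proof (Rabs_pos (fst (pic G1 G2 x0 y0 m) t - fst (pic G1 G2 x0 y0 n) t)).
    pose proof (Rabs_pos (snd (pic G1 G2 x0 y0 m) t - snd (pic G1 G2 x0 y0 n) t)).
    unfold c; split; lra. }
  assert (Hcau : forall (f : nat -> R), (forall n m, (n <= m)%nat -> Rabs (f m - f n) <= c * (1/2)^n) ->
     is_lim_seq f (real (Lim_seq f))).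
  { intros f Hf. apply Lim_seq_correct'. apply ex_lim_seq_cauchy_corr.
    intros eps. destruct (small_pow (2 * c) eps ltac:(lra) (cond_pos eps)) as [N HN].
    exists N. intros n m Hn Hm.
    pose proof (Hf N n Hn). pose proof (Hf N m Hm).
    replace (f n - f m) with ((f n - f N) - (f m - f N)) by ring.
    eapply Rle_lt_trans. apply Rabs_triang. rewrite Rabs_Ropp. lra. }
  split; apply Hcau; intros; apply HC; auto.
Qed.


Lemma tail_bound G1 G2 x0 y0 L B (H : PH G1 G2 L B) n t :
  Rabs (fst (pic G1 G2 x0 y0 n) t - lu G1 G2 x0 y0 t)
  + Rabs (snd (pic G1 G2 x0 y0 n) t - lv G1 G2 x0 y0 t)
  <= (2 * (2 * B / (4 * L)) * (1/2)^n) * exp ((4 * L) * Rabs t).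
Proof.
  destruct (lim_both _ _ x0 y0 _ _ H t) as [Hu Hv].
  assert (Hl : is_lim_seq (fun m => Rabs (fst (pic G1 G2 x0 y0 m) t - fst (pic G1 G2 x0 y0 n) t)
                 + Rabs (snd (pic G1 G2 x0 y0 m) t - snd (pic G1 G2 x0 y0 n) t))
      (Rabs (lu G1 G2 x0 y0 t - fst (pic G1 G2 x0 y0 n) t) + Rabs (lv G1 G2 x0 y0 t - snd (pic G1 G2 x0 y0 n) t))).
  { apply is_lim_seq_plus'.
    - apply (is_lim_seq_abs _ (Finite _)). apply is_lim_seq_minus'. apply Hu. apply is_lim_seq_const.
    - apply (is_lim_seq_abs _ (Finite _)). apply is_lim_seq_minus'. apply Hv. apply is_lim_seq_const. }
  pose proof (is_lim_seq_le_loc _ _ _ _ (ex_intro _ n (fun m Hm => pic_cauchy' _ _ x0 y0 _ _ H n m t Hm))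
     Hl (is_lim_seq_const _)) as HH.
  simpl in HH. rewrite (Rabs_minus_sym (fst _ t)), (Rabs_minus_sym (snd _ t)). lra.
Qed.

Lemma lim_lip G1 G2 x0 y0 L B (H : PH G1 G2 L B) s t :
  Rabs (lu G1 G2 x0 y0 s - lu G1 G2 x0 y0 t) <= B * Rabs (s - t) /\
  Rabs (lv G1 G2 x0 y0 s - lv G1 G2 x0 y0 t) <= B * Rabs (s - t).
Proof.
  destruct (lim_both _ _ x0 y0 _ _ H s) as [Hu1 Hv1].
  destruct (lim_both _ _ x0 y0 _ _ H t) as [Hu2 Hv2].
  split.
  - assert (HH := is_lim_seq_le _ _ _ _ (fun n => proj1 (pic_lip _ _ x0 y0 _ _ H n s t))
      (is_lim_seq_abs _ (Finite _) (is_lim_seq_minus' _ _ _ _ Hu1 Hu2)) (is_lim_seq_const _)).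
    exact HH.
  - assert (HH := is_lim_seq_le _ _ _ _ (fun n => proj2 (pic_lip _ _ x0 y0 _ _ H n s t))
      (is_lim_seq_abs _ (Finite _) (is_lim_seq_minus' _ _ _ _ Hv1 Hv2)) (is_lim_seq_const _)).
    exact HH.
Qed.

Lemma abs_le_0 (x : R) : Rabs x <= 0 -> x = 0.
Proof. intros H. unfold Rabs in H. destruct (Rcase_abs x); lra. Qed.

Lemma int_eq G1 G2 x0 y0 L B (H : PH G1 G2 L B) t :
  lu G1 G2 x0 y0 t = x0 + RInt (fun s => G1 (lu G1 G2 x0 y0 s) (lv G1 G2 x0 y0 s)) 0 t /\
  lv G1 G2 x0 y0 t = y0 + RInt (fun s => G2 (lu G1 G2 x0 y0 s) (lv G1 G2 x0 y0 s)) 0 t.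
Proof.
  pose proof (PH_B _ _ _ _ H) as HB0.
  pose proof (pic_lip _ _ x0 y0 _ _ H) as HLip.
  pose proof (lim_lip _ _ x0 y0 _ _ H) as HLip2.
  pose proof (tail_bound _ _ x0 y0 _ _ H) as Ht.
  destruct (lim_both _ _ x0 y0 _ _ H t) as [Hu Hv].
  destruct H as (HL & H1 & H2 & HB1 & HB2).
  set (u := lu G1 G2 x0 y0) in *. set (v := lv G1 G2 x0 y0) in *.
  set (C := 2 * B / (4 * L)) in *.
  set (e := exp (4 * L * Rabs t)).
  assert (Key : forall G (W : nat -> R -> R) (w : R -> R) x1, lipc G L ->
     (forall n, W (S n) t = x1 + RInt (fun s => G (fst (pic G1 G2 x0 y0 n) s) (snd (pic G1 G2 x0 y0 n) s)) 0 t) ->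
     is_lim_seq (fun n => W n t) (w t) ->
     w t = x1 + RInt (fun s => G (u s) (v s)) 0 t).
  { intros G W w x1 HG HW Hw.
    apply is_lim_seq_incr_1 in Hw.
    assert (Hb : forall n, Rabs (W (S n) t - (x1 + RInt (fun s => G (u s) (v s)) 0 t))
                 <= (L * (2 * C) * (e - 1) / (4 * L)) * (1/2)^n).
    { intros n. rewrite HW. rewrite plus_minus_2.
      eapply Rle_trans.
      apply (step_bound G L _ _ u v (2 * C * (1/2)^n) (4 * L) t); try lra; auto.
      - intros r. apply comp_cont with L B; auto; intros; apply HLip.
      - intros r. apply comp_cont with L B; auto; intros; apply HLip2.
      - right. unfold e. field. lra. }
    pose proof (is_lim_seq_le _ _ _ _ Hb
      (is_lim_seq_abs _ (Finite _) (is_lim_seq_minus' _ _ _ _ Hw (is_lim_seq_const (x1 + RInt (fun s => G (u s) (v s)) 0 t))))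
      (is_lim_seq_scal_l _ (L * (2 * C) * (e - 1) / (4 * L)) _ (is_lim_seq_geom (1/2) ltac:(rewrite Rabs_pos_eq; lra))))
      as HH.
    simpl in HH. rewrite Rmult_0_r in HH. apply abs_le_0 in HH. lra. }
  split.
  - apply (Key G1 (fun n => fst (pic G1 G2 x0 y0 n)) u x0 H1); auto.
  - apply (Key G2 (fun n => snd (pic G1 G2 x0 y0 n)) v y0 H2); auto.
Qed.


Lemma deriv_int (g : R -> R) (x1 t : R) : (forall s, continuous g s) ->
  is_derive (fun b => x1 + RInt g 0 b) t (g t).
Proof.
  intros Hc.
  assert (HD : is_derive (fun b => RInt g 0 b) t (g t)).
  { apply (is_derive_RInt g (fun b => RInt g 0 b) 0 t).
    apply filter_forall. intros b. exact (RInt_correct g 0 b (cont_ex_RInt g 0 b Hc)).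
    apply Hc. }
  pose proof (is_derive_plus (fun _ => x1) (fun b => RInt g 0 b) t _ _ (is_derive_const x1 t) HD) as HH.
  unfold plus, zero in HH; simpl in HH. rewrite Rplus_0_l in HH. exact HH.
Qed.

Lemma picard (G1 G2 : R -> R -> R) (x0 y0 L B : R) : PH G1 G2 L B ->
  exists u v : R -> R, u 0 = x0 /\ v 0 = y0 /\
    forall t, is_derive u t (G1 (u t) (v t)) /\ is_derive v t (G2 (u t) (v t)).
Proof.
  intros H.
  pose proof (PH_B _ _ _ _ H) as HB0.
  pose proof (lim_lip _ _ x0 y0 _ _ H) as HLip2.
  pose proof (int_eq _ _ x0 y0 _ _ H) as HI.
  destruct H as (HL & H1 & H2 & HB1 & HB2).
  exists (lu G1 G2 x0 y0), (lv G1 G2 x0 y0).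
  set (u := lu G1 G2 x0 y0) in *. set (v := lv G1 G2 x0 y0) in *.
  assert (C1 : forall r, continuous (fun s => G1 (u s) (v s)) r).
  { intros r. apply comp_cont with L B; auto; intros; apply HLip2. }
  assert (C2 : forall r, continuous (fun s => G2 (u s) (v s)) r).
  { intros r. apply comp_cont with L B; auto; intros; apply HLip2. }
  split; [|split].
  - rewrite (proj1 (HI 0)), RInt_point. unfold zero; simpl. ring.
  - rewrite (proj2 (HI 0)), RInt_point. unfold zero; simpl. ring.
  - intros t. split.
    + apply (is_derive_ext (fun b => x0 + RInt (fun s => G1 (u s) (v s)) 0 b) u).
      intros b; symmetry; apply (proj1 (HI b)).
      apply (deriv_int (fun s => G1 (u s) (v s))); auto.
    + apply (is_derive_ext (fun b => y0 + RInt (fun s => G2 (u s) (v s)) 0 b) v).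
      intros b; symmetry; apply (proj2 (HI b)).
      apply (deriv_int (fun s => G2 (u s) (v s))); auto.
Qed.


Lemma barrier (f df : R -> R) : (forall t, is_derive f t (df t)) -> 0 <= f 0 ->
  (forall t, 0 <= t -> f t <= 0 -> 0 <= df t) -> forall T, 0 <= T -> 0 <= f T.
Proof.
  intros Hd H0 Hc T HT.
  destruct (Rle_or_lt 0 (f T)) as [h|hT]; auto. exfalso.
  set (E := fun s => 0 <= s <= T /\ 0 <= f s).
  assert (Hb : bound E). { exists T. intros s [Hs _]. lra. }
  assert (He : exists x, E x). { exists 0. split; lra. }
  destruct (completeness E Hb He) as [t0 [Hub Hlub]].
  assert (Ht0T : t0 <= T). { apply Hlub. intros s [Hs _]. lra. }
  assert (H0t0 : 0 <= t0). { apply Hub. split; lra. }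
  assert (Hft0 : 0 <= f t0).
  { destruct (Rle_or_lt 0 (f t0)) as [h|h]; auto. exfalso.
    assert (Hcont : continuity_pt f t0).
    { apply continuity_pt_filterlim. apply cont_of_derive. eexists; apply Hd. }
    destruct (Hcont (- f t0) ltac:(lra)) as [alp [Halp Hal]].
    assert (Hnub : ~ is_upper_bound E (t0 - alp / 2)).
    { intros Hu. pose proof (Hlub _ Hu). lra. }
    apply Hnub. intros s Es.
    destruct (Rle_or_lt s (t0 - alp/2)) as [h'|h']; auto. exfalso.
    pose proof (Hub s Es).
    assert (Hs := Hal s). simpl in Hs. unfold R_dist in Hs.
    destruct Es as [_ Es].
    assert (Rabs (s - t0) < alp). { rewrite Rabs_left1 by lra. lra. }
    destruct (Req_dec s t0) as [->|Hne]. lra.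
    assert (Hs' : Rabs (f s - f t0) < - f t0).
    { apply Hs. split. split. constructor. auto. auto. }
    apply Rabs_def2 in Hs'. lra. }
  assert (Hlt : t0 < T). { destruct (Rle_lt_or_eq_dec _ _ Ht0T); auto. subst. lra. }
  assert (Hneg : forall s, t0 < s <= T -> f s < 0).
  { intros s Hs. destruct (Rle_or_lt 0 (f s)) as [h|h]; auto.
    assert (E s) by (split; [lra|auto]). pose proof (Hub s H). lra. }
  destruct (MVT_cor2 f df t0 T Hlt) as [c [Hm Hc']].
  { intros c _. apply is_derive_Reals. apply Hd. }
  assert (0 <= df c). { apply Hc. lra. left. apply Hneg. lra. }
  nra.
Qed.

Definition clamp (M z : R) := Rmin M (Rmax 0 z).

Lemma clamp_range M z : 0 <= M -> 0 <= clamp M z <= M.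
Proof. intros. unfold clamp, Rmin, Rmax. repeat destruct Rle_dec; lra. Qed.
Lemma clamp_id M z : 0 <= z <= M -> clamp M z = z.
Proof. intros. unfold clamp, Rmin, Rmax. repeat destruct Rle_dec; lra. Qed.
Lemma clamp_neg M z : 0 <= M -> z <= 0 -> clamp M z = 0.
Proof. intros. unfold clamp, Rmin, Rmax. repeat destruct Rle_dec; lra. Qed.
Lemma clamp_big M z : 0 <= M -> M <= z -> clamp M z = M.
Proof. intros. unfold clamp, Rmin, Rmax. repeat destruct Rle_dec; lra. Qed.
Lemma clamp_idem M z : 0 <= M -> clamp M (clamp M z) = clamp M z.
Proof. intros. apply clamp_id. apply clamp_range; auto. Qed.
Lemma clamp_lip M z z' : Rabs (clamp M z - clamp M z') <= Rabs (z - z').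
Proof. unfold clamp, Rmin, Rmax, Rabs. repeat destruct Rle_dec; repeat destruct Rcase_abs; lra. Qed.

Lemma quart_lip M a b : 0 <= a <= M -> 0 <= b <= M ->
  Rabs (Rabs a ^ 3 * a - Rabs b ^ 3 * b) <= 4 * M ^ 3 * Rabs (a - b).
Proof.
  intros Ha Hb. rewrite (Rabs_pos_eq a), (Rabs_pos_eq b) by lra.
  replace (a ^ 3 * a - b ^ 3 * b) with ((a - b) * ((a + b) * (a * a + b * b))) by ring.
  rewrite Rabs_mult, Rmult_comm.
  apply Rmult_le_compat_r. apply Rabs_pos.
  rewrite Rabs_pos_eq by nra.
  assert (a + b <= 2 * M) by lra. assert (a * a + b * b <= 2 * (M * M)) by nra.
  assert (0 <= a*a + b*b) by nra.
  replace (4 * M ^ 3) with ((2 * M) * (2 * (M * M))) by ring.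
  apply Rmult_le_compat; lra.
Qed.

Lemma lipc_nonneg G L : lipc G L -> 0 <= L.
Proof.
  intros H. specialize (H 1 0 0 0).
  replace (1 - 0) with 1 in H by ring. replace (0 - 0) with 0 in H by ring.
  rewrite Rabs_R1, Rabs_R0 in H.
  pose proof (Rabs_pos (G 1 0 - G 0 0)). lra.
Qed.
Lemma lipc_plus f g L1 L2 : lipc f L1 -> lipc g L2 -> lipc (fun x y => f x y + g x y) (L1 + L2).
Proof.
  intros H1 H2 x y x' y'.
  replace (f x y + g x y - (f x' y' + g x' y')) with ((f x y - f x' y') + (g x y - g x' y')) by ring.
  eapply Rle_trans. apply Rabs_triang. specialize (H1 x y x' y'). specialize (H2 x y x' y'). lra.
Qed.
Lemma lipc_scal k f L : lipc f L -> lipc (fun x y => k * f x y) (Rabs k * L).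
Proof.
  intros H x y x' y'. replace (k * f x y - k * f x' y') with (k * (f x y - f x' y')) by ring.
  rewrite Rabs_mult, Rmult_assoc. apply Rmult_le_compat_l. apply Rabs_pos. apply H.
Qed.
Lemma lipc_x h L : (forall x x', Rabs (h x - h x') <= L * Rabs (x - x')) -> lipc (fun x y => h x) L.
Proof.
  intros H x y x' y'. eapply Rle_trans. apply H.
  pose proof (H 1 0). replace (1 - 0) with 1 in H0 by ring. rewrite Rabs_R1 in H0.
  pose proof (Rabs_pos (h 1 - h 0)).
  pose proof (Rabs_pos (y - y')). nra.
Qed.
Lemma lipc_y h L : (forall x x', Rabs (h x - h x') <= L * Rabs (x - x')) -> lipc (fun x y => h y) L.
Proof.
  intros H x y x' y'. eapply Rle_trans. apply H.
  pose proof (H 1 0). replace (1 - 0) with 1 in H0 by ring. rewrite Rabs_R1 in H0.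
  pose proof (Rabs_pos (h 1 - h 0)).
  pose proof (Rabs_pos (x - x')). nra.
Qed.
Lemma lipc_ext f g L : (forall x y, f x y = g x y) -> lipc f L -> lipc g L.
Proof. intros E H x y x' y'. rewrite <- !E. apply H. Qed.
Lemma lipc_mono f L L' : L <= L' -> lipc f L -> lipc f L'.
Proof.
  intros HL H x y x' y'. eapply Rle_trans. apply H.
  pose proof (Rabs_pos (x - x')). pose proof (Rabs_pos (y - y')). nra.
Qed.

Lemma deriv_comb (u v : R -> R) du dv K a b t : is_derive u t du -> is_derive v t dv ->
  is_derive (fun s => K - (a * u s + b * v s)) t (-(a * du + b * dv)).
Proof.
  intros Hu Hv.
  pose proof (is_derive_minus _ _ t _ _ (is_derive_const K t)
     (is_derive_plus _ _ t _ _ (is_derive_scal _ t a du Hu) (is_derive_scal _ t b dv Hv))) as HH.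
  replace (-(a * du + b * dv)) with (minus zero (plus (scal a du) (scal b dv))).
  eapply is_derive_ext; [|exact HH]. intros s; simpl.
  unfold minus, plus, opp, scal; simpl. unfold mult; simpl. ring.
  unfold minus, plus, opp, scal, zero; simpl. unfold mult; simpl. ring.
Qed.


Lemma quart W d a b : 0 < d -> 0 <= W -> 0 <= a -> 0 <= b -> a <= b ->
  2 * (1 + W / d) <= a + b -> W * b <= d * b ^ 4.
Proof.
  intros Hd HW Ha Hb Hab Hs.
  set (r := 1 + W / d) in *.
  assert (Hr : d * r = d + W) by (unfold r; field; lra).
  assert (Hr1 : 1 <= r). { unfold r. assert (0 <= W / d) by (apply Rdiv_le_0_compat; lra). lra. }
  assert (Hbr : r <= b) by lra.
  assert (Hb3 : b <= b ^ 3). { simpl. assert (1 <= b * b) by nra. nra. }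
  assert (b ^ 4 = b ^ 3 * b) by ring.
  assert (d * r * b <= d * b ^ 3 * b).
  { apply Rmult_le_compat_r. lra. apply Rmult_le_compat_l; lra. }
  nra.
Qed.

Lemma quart2 A0 A1 d a b : 0 < d -> 0 <= A0 -> 0 <= A1 -> 0 <= a -> 0 <= b ->
  2 * (1 + (A0 + 2 * A1) / d) <= a + b -> A0 + A1 * (a + b) <= d * (a ^ 4 + b ^ 4).
Proof.
  intros Hd H0 H1 Ha Hb Hs.
  assert (W0 : 1 <= 1 + (A0 + 2 * A1) / d).
  { assert (0 <= (A0 + 2 * A1) / d) by (apply Rdiv_le_0_compat; lra). lra. }
  assert (a ^ 4 >= 0). { replace (a^4) with ((a*a)*(a*a)) by ring. nra. }
  assert (b ^ 4 >= 0). { replace (b^4) with ((b*b)*(b*b)) by ring. nra. }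
  destruct (Rle_or_lt a b) as [h|h].
  - pose proof (quart (A0 + 2 * A1) d a b Hd ltac:(lra) Ha Hb h Hs).
    assert (1 <= b) by lra. nra.
  - pose proof (quart (A0 + 2 * A1) d b a Hd ltac:(lra) Hb Ha ltac:(lra) ltac:(lra)).
    assert (1 <= a) by lra. nra.
Qed.

Lemma Eneg lam sig eps q La Ls ba0 bs0 ba bs a b :
  0 <= lam -> 0 < sig -> 0 < eps < 2 -> 0 <= q -> 0 <= La -> 0 <= Ls ->
  0 <= a -> 0 <= b -> ba <= ba0 + La * a -> bs <= bs0 + Ls * b -> 0 <= ba0 -> 0 <= bs0 ->
  2 * (1 + (q * (ba0 + (eps + 2) / 2 * bs0) + 2 * (lam + q * (La + (eps + 2) / 2 * Ls)))
         / (sig * (2 - eps) / 2 * Rmin 1 eps)) <= a + b ->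
  lam * ((eps + 2) / 2 - 1) * (a - b) + sig * (eps - (eps + 2) / 2) * b ^ 4
   + eps * sig * ((eps + 2) / 2 - 2) * a ^ 4 + q * ba + (eps + 2) / 2 * q * bs <= 0.
Proof.
  intros Hl Hs He Hq HLa HLs Ha Hb Hba Hbs Hba0 Hbs0 HR.
  set (c := (eps + 2) / 2) in *.
  set (d := sig * (2 - eps) / 2 * Rmin 1 eps) in *.
  assert (Hm1 : Rmin 1 eps <= 1) by apply Rmin_l.
  assert (Hm2 : Rmin 1 eps <= eps) by apply Rmin_r.
  assert (Hm0 : 0 < Rmin 1 eps) by (apply Rmin_pos; lra).
  assert (Hd : 0 < d). { unfold d. apply Rmult_lt_0_compat; [apply Rdiv_lt_0_compat; [nra|lra] | lra]. }
  assert (a ^ 4 >= 0). { replace (a^4) with ((a*a)*(a*a)) by ring. nra. }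
  assert (b ^ 4 >= 0). { replace (b^4) with ((b*b)*(b*b)) by ring. nra. }
  assert (Q1 : sig * (eps - c) * b ^ 4 <= - d * b ^ 4).
  { apply Rmult_le_compat_r. lra. unfold c, d.
    assert (sig * (2 - eps) / 2 * Rmin 1 eps <= sig * (2 - eps) / 2 * 1).
    { apply Rmult_le_compat_l; [|lra]. apply Rmult_le_pos; [|lra]. apply Rmult_le_pos; lra. }
    lra. }
  assert (Q2 : eps * sig * (c - 2) * a ^ 4 <= - d * a ^ 4).
  { apply Rmult_le_compat_r. lra. unfold c, d.
    assert (sig * (2 - eps) / 2 * Rmin 1 eps <= sig * (2 - eps) / 2 * eps).
    { apply Rmult_le_compat_l; [|lra]. apply Rmult_le_pos; [|lra]. apply Rmult_le_pos; lra. }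
    lra. }
  assert (Q3 : lam * (c - 1) * (a - b) <= lam * (a + b)).
  { unfold c. assert ((c - 1) * (a - b) <= a + b) by (unfold c; nra). unfold c in H1. nra. }
  assert (Q4 : q * ba <= q * ba0 + q * La * a) by nra.
  assert (Q5 : c * q * bs <= c * q * bs0 + c * q * Ls * b).
  { assert (0 <= c * q) by (unfold c; nra). nra. }
  assert (Hc0 : 0 <= c) by (unfold c; lra).
  assert (P1 : 0 <= q * (ba0 + c * bs0)) by (apply Rmult_le_pos; nra).
  assert (P2 : 0 <= lam + q * (La + c * Ls)) by (assert (0 <= q * (La + c * Ls)) by (apply Rmult_le_pos; nra); lra).
  pose proof (quart2 (q * (ba0 + c * bs0)) (lam + q * (La + c * Ls)) d a b Hd P1 P2 Ha Hb HR).
  assert (Hcq : 0 <= c * q * Ls) by (apply Rmult_le_pos; [apply Rmult_le_pos|]; lra).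
  assert (c * q * Ls * b <= (c * q * Ls) * (a + b)) by (apply Rmult_le_compat_l; lra).
  assert (HqL : 0 <= q * La) by (apply Rmult_le_pos; lra).
  assert (q * La * a <= q * La * (a + b)) by (apply Rmult_le_compat_l; lra).
  nra.
Qed.


Theorem corollary4p3
  (gamma_a gamma_s lambda q sigmaB eps_a : R)
  (beta_a beta_s : R -> R) (Ta0 Ts0 : R)
  (Hga : 0 < gamma_a) (Hgs : 0 < gamma_s) (Hl : 0 <= lambda) (Hq : 0 < q)
  (Hs : 0 < sigmaB) (He : 0 < eps_a < 2)
  (Hba : globally_lipschitz beta_a) (Hbs : globally_lipschitz beta_s)
  (Hba0 : forall x, 0 <= beta_a x) (Hbs0 : forall x, 0 < beta_s x)
  (HTa0 : 0 <= Ta0) (HTs0 : 0 <= Ts0) :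
  exists Ta Ts : R -> R,
    Ta 0 = Ta0 /\ Ts 0 = Ts0 /\
    forall t : R, 0 <= t ->
      ex_derive Ta t /\ ex_derive Ts t /\
      gamma_a * Derive Ta t =
        - lambda * (Ta t - Ts t) + eps_a * sigmaB * (Rabs (Ts t) ^ 3 * Ts t)
        - 2 * eps_a * sigmaB * (Rabs (Ta t) ^ 3 * Ta t) + q * beta_a (Ta t) /\
      gamma_s * Derive Ts t =
        - lambda * (Ts t - Ta t) - sigmaB * (Rabs (Ts t) ^ 3 * Ts t)
        + eps_a * sigmaB * (Rabs (Ta t) ^ 3 * Ta t) + q * beta_s (Ts t).
Proof.
  destruct Hba as [La [HLa Ha]]. destruct Hbs as [Ls [HLs Hsl]].
  set (c := (eps_a + 2) / 2).
  set (d := sigmaB * (2 - eps_a) / 2 * Rmin 1 eps_a).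
  set (A0 := q * (beta_a 0 + c * beta_s 0)).
  set (A1 := lambda + q * (La + c * Ls)).
  set (R0 := 2 * (1 + (A0 + 2 * A1) / d)).
  set (Gam := gamma_a + c * gamma_s).
  set (m0 := Rmin gamma_a (c * gamma_s)).
  set (K := Rmax (gamma_a * Ta0 + c * gamma_s * Ts0) (Gam * R0)).
  set (M := R0 + K / m0 + 1).
  assert (Hc : 1 < c < 2) by (unfold c; lra).
  assert (Hd : 0 < d).
  { unfold d. apply Rmult_lt_0_compat; [apply Rdiv_lt_0_compat; [nra|lra] | apply Rmin_pos; lra]. }
  assert (HA0 : 0 <= A0).
  { unfold A0. pose proof (Hba0 0). pose proof (Hbs0 0). apply Rmult_le_pos; nra. }
  assert (HA1 : 0 <= A1).
  { unfold A1. assert (0 <= q * (La + c * Ls)) by (apply Rmult_le_pos; nra). lra. }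
  assert (HR0 : 2 <= R0).
  { unfold R0. assert (0 <= (A0 + 2 * A1) / d) by (apply Rdiv_le_0_compat; lra). lra. }
  assert (HGam : 0 < Gam) by (unfold Gam; nra).
  assert (Hm0 : 0 < m0) by (unfold m0; apply Rmin_pos; nra).
  assert (Hm0a : m0 <= gamma_a) by apply Rmin_l.
  assert (Hm0s : m0 <= c * gamma_s) by apply Rmin_r.
  assert (HK1 : gamma_a * Ta0 + c * gamma_s * Ts0 <= K) by apply Rmax_l.
  assert (HK2 : Gam * R0 <= K) by apply Rmax_r.
  assert (HKm : K / m0 * m0 = K) by (field; lra).
  assert (HKm0 : 0 <= K / m0) by (apply Rdiv_le_0_compat; nra).
  assert (HM : 0 <= M) by (unfold M; lra).
  set (p := clamp M).
  set (G1 := fun x y => (- lambda * (p x - p y) + eps_a * sigmaB * (Rabs (p y) ^ 3 * p y)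
        - 2 * eps_a * sigmaB * (Rabs (p x) ^ 3 * p x) + q * beta_a (p x)) / gamma_a).
  set (G2 := fun x y => (- lambda * (p y - p x) - sigmaB * (Rabs (p y) ^ 3 * p y)
        + eps_a * sigmaB * (Rabs (p x) ^ 3 * p x) + q * beta_s (p y)) / gamma_s).
  assert (Lp : forall x x', Rabs (p x - p x') <= 1 * Rabs (x - x')).
  { intros. rewrite Rmult_1_l. apply clamp_lip. }
  assert (Lphi : forall x x', Rabs (Rabs (p x) ^ 3 * p x - Rabs (p x') ^ 3 * p x') <= 4 * M ^ 3 * Rabs (x - x')).
  { intros. eapply Rle_trans. apply quart_lip; apply clamp_range; auto.
    apply Rmult_le_compat_l. assert (0 <= M^3) by (apply pow_le; lra). lra. apply clamp_lip. }
  assert (Lba : forall x x', Rabs (beta_a (p x) - beta_a (p x')) <= La * Rabs (x - x')).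
  { intros. eapply Rle_trans. apply Ha. apply Rmult_le_compat_l. lra. apply clamp_lip. }
  assert (Lbs : forall x x', Rabs (beta_s (p x) - beta_s (p x')) <= Ls * Rabs (x - x')).
  { intros. eapply Rle_trans. apply Hsl. apply Rmult_le_compat_l. lra. apply clamp_lip. }
  assert (HG1 : exists L1, lipc G1 L1).
  { eexists. eapply lipc_ext; [|
      apply (lipc_scal (/ gamma_a)); apply lipc_plus; [apply lipc_plus; [apply lipc_plus; [apply lipc_plus|]|]|]].
    2: apply (lipc_scal (- lambda)); apply (lipc_x _ _ Lp).
    2: apply (lipc_scal lambda); apply (lipc_y _ _ Lp).
    2: apply (lipc_scal (eps_a * sigmaB)); apply (lipc_y _ _ Lphi).
    2: apply (lipc_scal (- (2 * eps_a * sigmaB))); apply (lipc_x _ _ Lphi).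
    2: apply (lipc_scal q); apply (lipc_x _ _ Lba).
    intros x y; simpl. unfold G1. field. lra. }
  assert (HG2 : exists L2, lipc G2 L2).
  { eexists. eapply lipc_ext; [|
      apply (lipc_scal (/ gamma_s)); apply lipc_plus; [apply lipc_plus; [apply lipc_plus; [apply lipc_plus|]|]|]].
    2: apply (lipc_scal (- lambda)); apply (lipc_y _ _ Lp).
    2: apply (lipc_scal lambda); apply (lipc_x _ _ Lp).
    2: apply (lipc_scal (- sigmaB)); apply (lipc_y _ _ Lphi).
    2: apply (lipc_scal (eps_a * sigmaB)); apply (lipc_x _ _ Lphi).
    2: apply (lipc_scal q); apply (lipc_y _ _ Lbs).
    intros x y; simpl. unfold G2. field. lra. }
  destruct HG1 as [L1 HG1]. destruct HG2 as [L2 HG2].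
  pose proof (lipc_nonneg _ _ HG1). pose proof (lipc_nonneg _ _ HG2).
  set (L := L1 + L2 + 1).
  assert (HG1' : lipc G1 L) by (apply (lipc_mono _ L1); unfold L; lra || auto).
  assert (HG2' : lipc G2 L) by (apply (lipc_mono _ L2); unfold L; lra || auto).
  set (B := Rabs (G1 0 0) + Rabs (G2 0 0) + L * (2 * M)).
  assert (Hbnd : forall G, lipc G L -> Rabs (G 0 0) <= Rabs (G1 0 0) + Rabs (G2 0 0) ->
     (forall x y, G x y = G (p x) (p y)) -> forall x y, Rabs (G x y) <= B).
  { intros G HG H00 Hp x y. rewrite Hp.
    replace (G (p x) (p y)) with (G 0 0 + (G (p x) (p y) - G 0 0)) by ring.
    eapply Rle_trans. apply Rabs_triang.
    specialize (HG (p x) (p y) 0 0).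
    rewrite !Rminus_0_r in HG.
    pose proof (clamp_range M x HM). pose proof (clamp_range M y HM).
    rewrite (Rabs_pos_eq (p x)) in HG by (unfold p; lra).
    rewrite (Rabs_pos_eq (p y)) in HG by (unfold p; lra).
    assert (L * (p x + p y) <= L * (2 * M)).
    { apply Rmult_le_compat_l. unfold L; lra. unfold p; lra. }
    unfold B. lra. }
  assert (HPH : PH G1 G2 L B).
  { split; [unfold L; lra|]. split; auto. split; auto. split; apply Hbnd; auto;
    try (pose proof (Rabs_pos (G1 0 0)); pose proof (Rabs_pos (G2 0 0)); lra);
    intros x y; unfold G1, G2, p; rewrite !clamp_idem; auto. }
  destruct (picard G1 G2 Ta0 Ts0 L B HPH) as [u [v [Hu0 [Hv0 Hder]]]].
  assert (Pu : forall t, 0 <= t -> 0 <= u t).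
  { apply (barrier u (fun t => G1 (u t) (v t))). intros; apply Hder. lra.
    intros t Ht Hut. unfold G1. unfold p. rewrite (clamp_neg M (u t)) by lra.
    pose proof (clamp_range M (v t) HM). set (b := clamp M (v t)) in *.
    rewrite (Rabs_pos_eq b) by lra.
    replace (Rabs 0 ^ 3 * 0) with 0 by ring.
    assert (0 <= b ^ 3 * b) by (apply Rmult_le_pos; [apply pow_le|]; lra).
    assert (0 <= eps_a * sigmaB * (b ^ 3 * b)) by (apply Rmult_le_pos; [apply Rmult_le_pos|]; lra).
    pose proof (Hba0 0).
    apply Rdiv_le_0_compat; [|lra]. nra. }
  assert (Pv : forall t, 0 <= t -> 0 <= v t).
  { apply (barrier v (fun t => G2 (u t) (v t))). intros; apply Hder. lra.
    intros t Ht Hvt. unfold G2. unfold p. rewrite (clamp_neg M (v t)) by lra.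
    pose proof (clamp_range M (u t) HM). set (a := clamp M (u t)) in *.
    rewrite (Rabs_pos_eq a) by lra.
    replace (Rabs 0 ^ 3 * 0) with 0 by ring.
    assert (0 <= a ^ 3 * a) by (apply Rmult_le_pos; [apply pow_le|]; lra).
    assert (0 <= eps_a * sigmaB * (a ^ 3 * a)) by (apply Rmult_le_pos; [apply Rmult_le_pos|]; lra).
    pose proof (Hbs0 0).
    apply Rdiv_le_0_compat; [|lra]. nra. }
  assert (PE : forall t, 0 <= t -> 0 <= K - (gamma_a * u t + c * gamma_s * v t)).
  { apply (barrier (fun t => K - (gamma_a * u t + c * gamma_s * v t))
       (fun t => - (gamma_a * G1 (u t) (v t) + c * gamma_s * G2 (u t) (v t)))).
    - intros t. apply deriv_comb; apply Hder.
    - rewrite Hu0, Hv0. lra.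
    - intros t Ht HE.
      pose proof (Pu t Ht). pose proof (Pv t Ht).
      assert (HR : R0 <= p (u t) + p (v t)).
      { unfold p. destruct (Rle_or_lt (u t) M) as [h1|h1].
        - destruct (Rle_or_lt (v t) M) as [h2|h2].
          + rewrite (clamp_id M (u t)), (clamp_id M (v t)) by lra.
            assert (Gam * (u t + v t) >= gamma_a * u t + c * gamma_s * v t).
            { unfold Gam. assert (0 <= c * gamma_s * u t) by (apply Rmult_le_pos; nra).
              assert (0 <= gamma_a * v t) by (apply Rmult_le_pos; nra). nra. }
            apply (Rmult_le_reg_l Gam); lra.
          + rewrite (clamp_big M (v t)) by lra.
            pose proof (clamp_range M (u t) HM). assert (R0 <= M) by (unfold M; lra). lra.
        - rewrite (clamp_big M (u t)) by lra.
          pose proof (clamp_range M (v t) HM). assert (R0 <= M) by (unfold M; lra). lra. }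
      pose proof (clamp_range M (u t) HM : 0 <= p (u t) <= M).
      pose proof (clamp_range M (v t) HM : 0 <= p (v t) <= M).
      unfold G1, G2. set (a := p (u t)) in *. set (b := p (v t)) in *.
      assert (Ea : beta_a a <= beta_a 0 + La * a).
      { pose proof (Ha a 0) as Q. replace (a - 0) with a in Q by ring.
        rewrite (Rabs_pos_eq a) in Q by lra.
        unfold Rabs in Q; destruct (Rcase_abs (beta_a a - beta_a 0)); lra. }
      assert (Eb : beta_s b <= beta_s 0 + Ls * b).
      { pose proof (Hsl b 0) as Q. replace (b - 0) with b in Q by ring.
        rewrite (Rabs_pos_eq b) in Q by lra.
        unfold Rabs in Q; destruct (Rcase_abs (beta_s b - beta_s 0)); lra. }
      pose proof (Hba0 0). pose proof (Hbs0 0).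
      pose proof (Eneg lambda sigmaB eps_a q La Ls (beta_a 0) (beta_s 0) (beta_a a) (beta_s b) a b
        Hl Hs He ltac:(lra) HLa HLs ltac:(lra) ltac:(lra) Ea Eb ltac:(lra) ltac:(lra) HR) as HN.
      rewrite (Rabs_pos_eq a), (Rabs_pos_eq b) by lra.
      match goal with |- 0 <= - ?X => replace X with
        (lambda * ((eps_a + 2) / 2 - 1) * (a - b) + sigmaB * (eps_a - (eps_a + 2) / 2) * b ^ 4
         + eps_a * sigmaB * ((eps_a + 2) / 2 - 2) * a ^ 4 + q * beta_a a + (eps_a + 2) / 2 * q * beta_s b)
        by (unfold c; field; lra) end.
      lra. }
  assert (Bnd : forall t, 0 <= t -> 0 <= u t < M /\ 0 <= v t < M).
  { intros t Ht. pose proof (PE t Ht). pose proof (Pu t Ht). pose proof (Pv t Ht).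
    assert (Q3 : u t * m0 <= K / m0 * m0). { rewrite HKm. nra. }
    assert (Q4 : v t * m0 <= K / m0 * m0). { rewrite HKm. nra. }
    apply Rmult_le_reg_r in Q3; auto. apply Rmult_le_reg_r in Q4; auto.
    unfold M. lra. }
  exists u, v. split; [auto|]. split; [auto|].
  intros t Ht. destruct (Hder t) as [D1 D2]. destruct (Bnd t Ht) as [B1 B2].
  assert (Pu' : p (u t) = u t) by (unfold p; apply clamp_id; lra).
  assert (Pv' : p (v t) = v t) by (unfold p; apply clamp_id; lra).
  split; [eexists; exact D1|]. split; [eexists; exact D2|].
  rewrite (is_derive_unique _ _ _ D1), (is_derive_unique _ _ _ D2).
  unfold G1, G2. rewrite Pu', Pv'. split; field; lra.
Qed.
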